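(* Let $P=(|P|,\preccurlyeq)$ be a finite poset, $S\subseteq|P|$ a chain, and $x,y$ two $\preccurlyeq$-incomparable elements of $|P|\setminus S$. Define $\preccurlyeq_{x,y}$ on $|P|$ by: $w\preccurlyeq_{x,y}z$ iff either $w\preccurlyeq z$, or ($w\preccurlyeq x$ and $y\preccurlyeq z$). Then the following are equivalent: (a) some $u\in|P|$ is $\preccurlyeq$-incomparable with at least one element of $S$ but $\preccurlyeq_{x,y}$-comparable with every element of $S$; (b) $x$ or $y$ is $\preccurlyeq$-incomparable with at least one element of $S$ but $\preccurlyeq_{x,y}$-comparable with every element of $S$; (c) $({\downarrow}x\cap S)\cup({\uparrow}y\cap S)=S$ but $({\downarrow}y\cap S)\cup({\uparrow}x\cap S)\ne S$.
   Context: For $z\in|P|$, ${\downarrow}z=\{w\in|P|: w\preccurlyeq z\}$ and ${\uparrow}z=\{w\in|P|: z\preccurlyeq w\}$. The relation $\preccurlyeq_{x,y}$ is the smallest partial ordering extending $\preccurlyeq$ in which $x\preccurlyeq_{x,y} y$. *)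

(* Defs.v *)
From HB Require Import structures.
From mathcomp Require Import all_boot all_order.
Set Implicit Arguments. Unset Strict Implicit. Unset Printing Implicit Defensive.
Import Order.TTheory.
Local Open Scope order_scope.

(* A finite poset P = (|P|, <=) is a finPOrderType; |P| is its finite carrier. *)

Definition lexy {d} {T : finPOrderType d} (x y : T) (w z : T) : bool :=
  (w <= z) || ((w <= x) && (y <= z)).

Definition cmpxy {d} {T : finPOrderType d} (x y : T) (w z : T) : bool :=
  lexy x y w z || lexy x y z w.

Definition is_chain {d} {T : finPOrderType d} (S : {set T}) : Prop :=
  {in S &, forall a b : T, a >=< b}.

Definition downset {d} {T : finPOrderType d} (z : T) : {set T} := [set w | w <= z].
Definition upset {d} {T : finPOrderType d} (z : T) : {set T} := [set w | z <= w].

Definition newly_comparable {d} {T : finPOrderType d} (x y : T) (S : {set T}) (u : T) : Prop :=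
  (exists2 s, s \in S & u >< s) /\ (forall s, s \in S -> cmpxy x y u s).

(* Main.v *)
Require Import Defs.
From HB Require Import structures.
From mathcomp Require Import all_boot all_order.
Import Order.TTheory.
Local Open Scope order_scope.

Section Aux.
Context {d : Order.disp_t} {T : finPOrderType d}.
Implicit Types (S : {set T}) (x y : T).

Lemma c1P S x y : ((downset x :&: S) :|: (upset y :&: S) = S) <->
  (forall s, s \in S -> (s <= x) || (y <= s)).
Proof.
split.
- move=> E s sS; move: sS; rewrite -{1}E !inE.
  by case/orP=> /andP[-> _] //; rewrite orbT.
- move=> H; apply/setP=> s; rewrite !inE.
  case sS: (s \in S); last by rewrite !andbF.
  by rewrite !andbT; apply: H.
Qed.

Lemma c2P S x y : ((downset y :&: S) :|: (upset x :&: S) != S) <->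
  (exists2 s, s \in S & ~~ (s <= y) && ~~ (x <= s)).
Proof.
split.
- move=> N.
  case: (pickP [pred s | (s \in S) && (~~ (s <= y) && ~~ (x <= s))]).
    by move=> s /= /andP[sS h]; exists s.
  move=> H; move/negP: N; case; apply/eqP/setP=> s; rewrite !inE.
  case sS: (s \in S); last by rewrite !andbF.
  rewrite !andbT; move: (H s); rewrite /= sS /=.
  by case: (s <= y); case: (x <= s).
- case=> s sS /andP[h1 h2]; apply/negP=> /eqP E.
  move: sS; rewrite -E !inE (negbTE h1) (negbTE h2).
  by rewrite !andFb.
Qed.
End Aux.

Theorem corollary7p1 (d : Order.disp_t) (T : finPOrderType d) (S : {set T}) (x y : T) :
  is_chain S -> x \notin S -> y \notin S -> x >< y ->
  [/\ ((exists u : T, newly_comparable x y S u) <->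
        (newly_comparable x y S x \/ newly_comparable x y S y)),
      ((newly_comparable x y S x \/ newly_comparable x y S y) <->
        (((downset x :&: S) :|: (upset y :&: S) = S) /\
         ((downset y :&: S) :|: (upset x :&: S) != S)))
    & ((exists u : T, newly_comparable x y S u) <->
        (((downset x :&: S) :|: (upset y :&: S) = S) /\
         ((downset y :&: S) :|: (upset x :&: S) != S)))].
Proof.
move=> ch xS yS ixy.
have ba : (newly_comparable x y S x \/ newly_comparable x y S y) ->
          exists u : T, newly_comparable x y S u.
  by case=> h; [exists x | exists y].
have ac : (exists u : T, newly_comparable x y S u) ->
   (((downset x :&: S) :|: (upset y :&: S) = S) /\
    ((downset y :&: S) :|: (upset x :&: S) != S)).
  case=> u [[s0 s0S us0] hc].
  move: (hc s0 s0S); rewrite /cmpxy /lexy.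
  move: us0; rewrite /Order.comparable negb_or => /andP[/negbTE n1 /negbTE n2].
  rewrite n1 n2 /= => hcase.
  case/orP: hcase => /andP[h1 h2]; split.
  - apply/c1P=> s sS; case/orP: (ch s s0 sS s0S) => [ss0|s0s]; last by rewrite (le_trans h2 s0s) orbT.
    move: (hc s sS); rewrite /cmpxy /lexy.
    case/orP => [/orP[us|/andP[_ ys]] | /orP[su|/andP[sx _]]].
    + by rewrite (le_trans us ss0) in n1.
    + by rewrite ys orbT.
    + by rewrite (le_trans su h1).
    + by rewrite sx.
  - apply/c2P; exists s0 => //; apply/andP; split; apply/negP => h.
    + have e : s0 = y by apply/le_anti; rewrite h h2.
      by rewrite -e s0S in yS.
    + by rewrite (le_trans h1 h) in n1.
  - apply/c1P=> s sS; case/orP: (ch s s0 sS s0S) => [ss0|s0s]; first by rewrite (le_trans ss0 h1).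
    move: (hc s sS); rewrite /cmpxy /lexy.
    case/orP => [/orP[us|/andP[_ ys]] | /orP[su|/andP[sx _]]].
    + by rewrite (le_trans h2 us) orbT.
    + by rewrite ys orbT.
    + by rewrite (le_trans s0s su) in n2.
    + by rewrite sx.
  - apply/c2P; exists s0 => //; apply/andP; split; apply/negP => h.
    + by rewrite (le_trans h h2) in n2.
    + have e : s0 = x by apply/le_anti; rewrite h h1.
      by rewrite -e s0S in xS.
have cb : (((downset x :&: S) :|: (upset y :&: S) = S) /\
    ((downset y :&: S) :|: (upset x :&: S) != S)) ->
    (newly_comparable x y S x \/ newly_comparable x y S y).
  case=> /c1P H1 /c2P [s sS /andP[nsy nxs]].
  case/orP: (H1 s sS) => [sx|ys].
  - right; split.
      exists s => //; rewrite /Order.comparable negb_or nsy andbT; apply/negP=> ys.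
      by move: ixy; rewrite /Order.comparable (le_trans ys sx) orbT.
    move=> t tS; rewrite /cmpxy /lexy.
    by case/orP: (H1 t tS) => h; rewrite h lexx /= ?orbT.
  - left; split.
      exists s => //; rewrite /Order.comparable negb_or nxs /=; apply/negP=> sx.
      by move: ixy; rewrite /Order.comparable (le_trans ys sx) orbT.
    move=> t tS; rewrite /cmpxy /lexy.
    by case/orP: (H1 t tS) => h; rewrite h lexx /= ?orbT.
split; split; auto.
Qed.
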